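(* Let $\lambda,\mu\in\mathbb{C}\setminus\{0,1\}$ and $a,b\in\mathbb{C}^n$ with $a\neq b$, let $G$ be the group generated by $f=(a,\lambda)$ and $g=(b,\mu)$, and let $L=\mathbb{C}(b-a)+a$. If $\overline{G(a)}=L$, then $\overline{G(z)}=L$ for every $z\in L$.
   Context: For $c\in\mathbb{C}^n$ and $\nu\in\mathbb{C}\setminus\{0,1\}$, $(c,\nu)$ denotes the map $z\mapsto\nu(z-c)+c$ of $\mathbb{C}^n$. $\mathbb{C}(b-a)+a=\{a+t(b-a):t\in\mathbb{C}\}$; $G(z)=\{h(z):h\in G\}$. *)

(* Defs.v *)
From Stdlib Require Import Reals.
From Stdlib Require Fin.
Open Scope R_scope.

Definition CC := (R * R)%type.
Definition CC0 : CC := (0, 0).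
Definition CC1 : CC := (1, 0).
Definition Cadd (z w : CC) : CC := (fst z + fst w, snd z + snd w).
Definition Copp (z : CC) : CC := (- fst z, - snd z).
Definition Csub (z w : CC) : CC := Cadd z (Copp w).
Definition Cmul (z w : CC) : CC :=
  (fst z * fst w - snd z * snd w, fst z * snd w + snd z * fst w).
Definition Cinv (z : CC) : CC :=
  let d := fst z * fst z + snd z * snd z in (fst z / d, - snd z / d).
Definition Cnorm (z : CC) : R := sqrt (fst z * fst z + snd z * snd z).

Definition Cn (n : nat) := Fin.t n -> CC.
Definition vadd {n} (u v : Cn n) : Cn n := fun i => Cadd (u i) (v i).
Definition vsub {n} (u v : Cn n) : Cn n := fun i => Csub (u i) (v i).
Definition vscale {n} (t : CC) (u : Cn n) : Cn n := fun i => Cmul t (u i).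

(* The map (c, nu) : z |-> nu (z - c) + c *)
Definition hmap {n} (c : Cn n) (nu : CC) (z : Cn n) : Cn n :=
  vadd (vscale nu (vsub z c)) c.

Inductive in_group {n} (a b : Cn n) (lam mu : CC) : (Cn n -> Cn n) -> Prop :=
| ig_id : in_group a b lam mu (fun z => z)
| ig_f  : forall h, in_group a b lam mu h ->
            in_group a b lam mu (fun z => hmap a lam (h z))
| ig_fi : forall h, in_group a b lam mu h ->
            in_group a b lam mu (fun z => hmap a (Cinv lam) (h z))
| ig_g  : forall h, in_group a b lam mu h ->
            in_group a b lam mu (fun z => hmap b mu (h z))
| ig_gi : forall h, in_group a b lam mu h ->
            in_group a b lam mu (fun z => hmap b (Cinv mu) (h z)).

Definition orbit {n} (a b : Cn n) (lam mu : CC) (z : Cn n) : Cn n -> Prop :=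
  fun w => exists h, in_group a b lam mu h /\ w = h z.

Definition closure {n} (S : Cn n -> Prop) : Cn n -> Prop :=
  fun w => forall eps, eps > 0 ->
    exists s, S s /\ forall i, Cnorm (Csub (w i) (s i)) < eps.

Definition cline {n} (a b : Cn n) : Cn n -> Prop :=
  fun w => exists t : CC, w = vadd (vscale t (vsub b a)) a.

(* Main.v *)
Require Import Defs.
From Stdlib Require Import Reals Lra Psatz Classical FunctionalExtensionality.
Open Scope R_scope.

Ltac cdestr := repeat match goal with | p : CC |- context[?q] => constr_eq p q; destruct p | p : (R * R)%type |- context[?q] => constr_eq p q; destruct p end.
Lemma sos2 x y : 0 <= x*x + y*y.
Proof. pose proof (Rle_0_sqr x); pose proof (Rle_0_sqr y); unfold Rsqr in *; lra. Qed.

Ltac cring := cdestr; unfold Csub, Cadd, Copp, Cmul, CC1, CC0 in *; simpl; f_equal; ring.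

Lemma Cnorm_nonneg x : 0 <= Cnorm x.
Proof. unfold Cnorm; apply sqrt_pos. Qed.

Lemma Cnorm_mul x y : Cnorm (Cmul x y) = Cnorm x * Cnorm y.
Proof.
  destruct x as [x1 x2], y as [y1 y2]; unfold Cnorm, Cmul; simpl.
  rewrite <- sqrt_mult by apply sos2. f_equal; ring.
Qed.

Lemma Cnorm_pos x : x <> CC0 -> 0 < Cnorm x.
Proof.
  destruct x as [x1 x2]; intro H; unfold Cnorm; simpl. apply sqrt_lt_R0.
  destruct (Req_dec x1 0); destruct (Req_dec x2 0); subst; try nra.
  exfalso; apply H; reflexivity.
Qed.

Lemma Cnorm_tri u v : Cnorm (Cadd u v) <= Cnorm u + Cnorm v.
Proof.
  destruct u as [u1 u2], v as [v1 v2]; unfold Cnorm, Cadd; simpl.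
  set (U := u1*u1+u2*u2). set (V := v1*v1+v2*v2).
  set (W := (u1+v1)*(u1+v1)+(u2+v2)*(u2+v2)).
  assert (hU : 0 <= U) by apply sos2. assert (hV : 0 <= V) by apply sos2.
  assert (hS : 0 <= W) by apply sos2.
  pose proof (sqrt_sqrt U hU). pose proof (sqrt_sqrt V hV). pose proof (sqrt_sqrt W hS).
  pose proof (sqrt_pos U). pose proof (sqrt_pos V). pose proof (sqrt_pos W).
  assert (hp : u1*v1+u2*v2 <= sqrt U * sqrt V).
  { assert (0 <= sqrt U * sqrt V) by (apply Rmult_le_pos; assumption).
    destruct (Rle_dec (u1*v1+u2*v2) 0). { lra. }
    apply Rsqr_incr_0_var; [|nra]. unfold Rsqr.
    replace (sqrt U * sqrt V * (sqrt U * sqrt V)) with (U*V) by nra.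
    pose proof (Rle_0_sqr (u1*v2-u2*v1)); unfold Rsqr in *.
    assert (U*V - (u1*v1+u2*v2)*(u1*v1+u2*v2) = (u1*v2-u2*v1)*(u1*v2-u2*v1)) by (unfold U, V; ring).
    lra. }
  assert (W = U + V + 2*(u1*v1+u2*v2)) by (unfold W, U, V; ring).
  nra.
Qed.

Lemma fin_bound n (F : Fin.t n -> R) : exists M, forall i, F i <= M.
Proof.
  induction n.
  - exists 0; intro i; inversion i.
  - destruct (IHn (fun i => F (Fin.FS i))) as [M HM].
    exists (Rmax (F Fin.F1) M). intro i. pattern i; apply Fin.caseS'.
    + apply Rmax_l.
    + intro p; eapply Rle_trans; [apply HM | apply Rmax_r].
Qed.
Section S.
Context {n : nat} (a b : Cn n) (lam mu : CC).
Definition pt (r : CC) : Cn n := vadd (vscale r (vsub b a)) a.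
Definition trans (v : CC) (x : Cn n) : Cn n := vadd x (vscale v (vsub b a)).
Definition G := in_group a b lam mu.
Definition TR v := G (trans v).

Lemma ig_comp (h1 h2 : Cn n -> Cn n) : G h1 -> G h2 -> G (fun x => h1 (h2 x)).
Proof.
  unfold G; intros H1 H2; induction H1; cbv beta;
  [exact H2 | apply ig_f | apply ig_fi | apply ig_g | apply ig_gi]; assumption.
Qed.

Lemma ig_ext (h k : Cn n -> Cn n) : G h -> (forall x, h x = k x) -> G k.
Proof. intros H E. replace k with h; [exact H | apply functional_extensionality; exact E]. Qed.

Lemma gen_f : G (hmap a lam).
Proof. change (G (fun z => hmap a lam ((fun z => z) z))); apply ig_f, ig_id. Qed.
Lemma gen_fi : G (hmap a (Cinv lam)).
Proof. change (G (fun z => hmap a (Cinv lam) ((fun z => z) z))); apply ig_fi, ig_id. Qed.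
Lemma gen_g : G (hmap b mu).
Proof. change (G (fun z => hmap b mu ((fun z => z) z))); apply ig_g, ig_id. Qed.
Lemma gen_gi : G (hmap b (Cinv mu)).
Proof. change (G (fun z => hmap b (Cinv mu) ((fun z => z) z))); apply ig_gi, ig_id. Qed.

Ltac vext := apply functional_extensionality; let i := fresh "i" in intro i;
  unfold pt, trans, hmap, vadd, vscale, vsub;
  generalize (a i) (b i); intros.

Lemma pt_hmap_a nu r : hmap a nu (pt r) = pt (Cmul nu r).
Proof. vext. cring. Qed.
Lemma pt_hmap_b nu r : hmap b nu (pt r) = pt (Cadd (Cmul nu r) (Csub CC1 nu)).
Proof. vext. cring. Qed.
Lemma a_pt0 : a = pt CC0.
Proof. vext. cring. Qed.
Lemma trans_pt v r : trans v (pt r) = pt (Cadd r v).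
Proof. vext. cring. Qed.

Lemma conj_cc (nu nu' x c v w : CC) : Cmul nu nu' = CC1 ->
  Cadd (Cmul nu (Csub (Cadd (Cadd (Cmul nu' (Csub x c)) c) (Cmul v w)) c)) c
  = Cadd x (Cmul (Cmul nu v) w).
Proof.
  intro H. transitivity (Cadd (Cadd (Cmul (Cmul nu nu') (Csub x c)) c) (Cmul (Cmul nu v) w)).
  - cring.
  - rewrite H. cring.
Qed.

Lemma TR_conj c nu nu' v : G (hmap c nu) -> G (hmap c nu') -> Cmul nu nu' = CC1 ->
  TR v -> TR (Cmul nu v).
Proof.
  intros H1 H2 E H. unfold TR.
  apply ig_ext with (fun x => hmap c nu (trans v (hmap c nu' x))).
  - apply ig_comp; [exact H1|]. apply ig_comp; assumption.
  - intro x; apply functional_extensionality; intro i.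
    unfold trans, hmap, vadd, vscale, vsub. apply conj_cc; exact E.
Qed.

Lemma TR_add v w : TR v -> TR w -> TR (Cadd w v).
Proof.
  intros H1 H2. unfold TR. apply ig_ext with (fun x => trans v (trans w x)).
  - apply ig_comp; assumption.
  - intro x; apply functional_extensionality; intro i.
    unfold trans, vadd, vscale, vsub. generalize (a i) (b i) (x i); intros. cring.
Qed.

Lemma TR_0 : TR CC0.
Proof.
  unfold TR. apply ig_ext with (fun x => x). apply ig_id.
  intro x; apply functional_extensionality; intro i.
  unfold trans, vadd, vscale, vsub. generalize (a i) (b i) (x i); intros. cring.
Qed.
End S.
Lemma CC0_norm (l : CC) : l <> CC0 -> fst l * fst l + snd l * snd l <> 0.
Proof. intros H E. pose proof (Cnorm_pos l H). unfold Cnorm in H0. rewrite E, sqrt_0 in H0. lra. Qed.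

Lemma comm_cc l m x a b : l <> CC0 -> m <> CC0 ->
  Cadd (Cmul l (Csub (Cadd (Cmul m (Csub (Cadd (Cmul (Cinv l) (Csub
    (Cadd (Cmul (Cinv m) (Csub x b)) b) a)) a) b)) b) a)) a
  = Cadd x (Cmul (Cmul (Csub l CC1) (Csub CC1 m)) (Csub b a)).
Proof.
  intros Hl Hm. apply CC0_norm in Hl. apply CC0_norm in Hm.
  destruct l as [l1 l2], m as [m1 m2], x, a, b; simpl in *.
  unfold Cadd, Csub, Copp, Cmul, Cinv, CC1; simpl. f_equal; field; auto.
Qed.

Lemma comm2_cc l m x a b : l <> CC0 -> m <> CC0 ->
  Cadd (Cmul m (Csub (Cadd (Cmul l (Csub (Cadd (Cmul (Cinv m) (Csub
    (Cadd (Cmul (Cinv l) (Csub x a)) a) b)) b) a)) a) b)) b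
  = Cadd x (Cmul (Copp (Cmul (Csub l CC1) (Csub CC1 m))) (Csub b a)).
Proof.
  intros Hl Hm. apply CC0_norm in Hl. apply CC0_norm in Hm.
  destruct l as [l1 l2], m as [m1 m2], x, a, b; simpl in *.
  unfold Cadd, Csub, Copp, Cmul, Cinv, CC1; simpl. f_equal; field; auto.
Qed.

Lemma Cinv_r l : l <> CC0 -> Cmul l (Cinv l) = CC1.
Proof. intro H; apply CC0_norm in H; destruct l; simpl in *; unfold Cmul, Cinv, CC1; simpl; f_equal; field; auto. Qed.
Lemma Cinv_l l : l <> CC0 -> Cmul (Cinv l) l = CC1.
Proof. intro H; apply CC0_norm in H; destruct l; simpl in *; unfold Cmul, Cinv, CC1; simpl; f_equal; field; auto. Qed.
Definition beta (lam mu : CC) := Cmul (Csub lam CC1) (Csub CC1 mu).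

Lemma TR_beta n (a b : Cn n) lam mu : lam <> CC0 -> mu <> CC0 -> TR a b lam mu (beta lam mu).
Proof.
  intros Hl Hm. unfold TR.
  apply ig_ext with (fun x => hmap a lam (hmap b mu (hmap a (Cinv lam) (hmap b (Cinv mu) x)))).
  - apply (ig_comp a b lam mu (hmap a lam)); [apply gen_f|].
    apply (ig_comp a b lam mu (hmap b mu)); [apply gen_g|].
    apply (ig_comp a b lam mu (hmap a (Cinv lam))); [apply gen_fi|]. apply gen_gi.
  - intro x; apply functional_extensionality; intro i.
    unfold trans, hmap, vadd, vscale, vsub. apply comm_cc; auto.
Qed.

Lemma TR_beta' n (a b : Cn n) lam mu : lam <> CC0 -> mu <> CC0 -> TR a b lam mu (Copp (beta lam mu)).
Proof.
  intros Hl Hm. unfold TR.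
  apply ig_ext with (fun x => hmap b mu (hmap a lam (hmap b (Cinv mu) (hmap a (Cinv lam) x)))).
  - apply (ig_comp a b lam mu (hmap b mu)); [apply gen_g|].
    apply (ig_comp a b lam mu (hmap a lam)); [apply gen_f|].
    apply (ig_comp a b lam mu (hmap b (Cinv mu))); [apply gen_gi|]. apply gen_fi.
  - intro x; apply functional_extensionality; intro i.
    unfold trans, hmap, vadd, vscale, vsub. apply comm2_cc; auto.
Qed.

Lemma stepA n (a b : Cn n) lam mu nu nu' r : G a b lam mu (hmap a nu) -> G a b lam mu (hmap a nu') ->
  Cmul nu nu' = CC1 -> TR a b lam mu (Cmul (beta lam mu) r) ->
  TR a b lam mu (Cmul (beta lam mu) (Cmul nu r)).
Proof.
  intros H1 H2 E H. replace (Cmul (beta lam mu) (Cmul nu r)) with (Cmul nu (Cmul (beta lam mu) r)).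
  - eapply TR_conj; eauto.
  - unfold beta; cring.
Qed.

Lemma stepB n (a b : Cn n) lam mu nu nu' r : lam <> CC0 -> mu <> CC0 ->
  G a b lam mu (hmap b nu) -> G a b lam mu (hmap b nu') ->
  Cmul nu nu' = CC1 -> TR a b lam mu (Cmul (beta lam mu) r) ->
  TR a b lam mu (Cmul (beta lam mu) (Cadd (Cmul nu r) (Csub CC1 nu))).
Proof.
  intros Hl Hm H1 H2 E H.
  pose proof (TR_conj a b lam mu b nu nu' _ H1 H2 E H) as X1.
  pose proof (TR_conj a b lam mu b nu nu' _ H1 H2 E (TR_beta' n a b lam mu Hl Hm)) as X2.
  pose proof (TR_add a b lam mu _ _ (TR_beta n a b lam mu Hl Hm) X2) as X3.
  pose proof (TR_add a b lam mu _ _ X1 X3) as X4.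
  match type of X4 with TR _ _ _ _ ?v => replace (Cmul (beta lam mu) (Cadd (Cmul nu r) (Csub CC1 nu))) with v end.
  - exact X4.
  - unfold beta; cring.
Qed.

Lemma lemB n (a b : Cn n) lam mu h : lam <> CC0 -> mu <> CC0 -> G a b lam mu h ->
  exists r, h a = pt a b r /\ TR a b lam mu (Cmul (beta lam mu) r).
Proof.
  intros Hl Hm H. induction H as [|h H [r [E T]]|h H [r [E T]]|h H [r [E T]]|h H [r [E T]]]; cbv beta.
  - exists CC0. split. apply a_pt0. replace (Cmul (beta lam mu) CC0) with CC0 by (unfold beta; cring). apply TR_0.
  - exists (Cmul lam r). rewrite E, pt_hmap_a. split; [reflexivity|].
    eapply stepA; [apply gen_f | apply gen_fi | apply Cinv_r; auto | exact T].
  - exists (Cmul (Cinv lam) r). rewrite E, pt_hmap_a. split; [reflexivity|].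
    eapply stepA; [apply gen_fi | apply gen_f | apply Cinv_l; auto | exact T].
  - eexists. rewrite E, pt_hmap_b. split; [reflexivity|].
    eapply stepB; [auto | auto | apply gen_g | apply gen_gi | apply Cinv_r; auto | exact T].
  - eexists. rewrite E, pt_hmap_b. split; [reflexivity|].
    eapply stepB; [auto | auto | apply gen_gi | apply gen_g | apply Cinv_l; auto | exact T].
Qed.

Lemma lemA n (a b : Cn n) lam mu h : G a b lam mu h -> forall t, exists r, h (pt a b t) = pt a b r.
Proof.
  intros H t. induction H as [|h H [r E]|h H [r E]|h H [r E]|h H [r E]]; cbv beta.
  - eauto.
  - rewrite E, pt_hmap_a; eauto.
  - rewrite E, pt_hmap_a; eauto.
  - rewrite E, pt_hmap_b; eauto.
  - rewrite E, pt_hmap_b; eauto.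
Qed.
Lemma closure_mono n (S T : Cn n -> Prop) w : (forall x, S x -> T x) -> closure S w -> closure T w.
Proof.
  intros HST H eps He. destruct (H eps He) as [s [Hs Hi]]. exists s; split; auto.
Qed.

Lemma closure_idem n (S : Cn n -> Prop) w : closure (closure S) w -> closure S w.
Proof.
  intros H eps He. destruct (H (eps/2)) as [s [Hs Hi]]; [lra|].
  destruct (Hs (eps/2)) as [s' [Hs' Hi']]; [lra|].
  exists s'; split; auto. intro i.
  replace (Csub (w i) (s' i)) with (Cadd (Csub (w i) (s i)) (Csub (s i) (s' i))) by (generalize (w i) (s i) (s' i); intros; cring).
  eapply Rle_lt_trans; [apply Cnorm_tri|]. specialize (Hi i); specialize (Hi' i); lra.
Qed.

Lemma mul_ne0 x y : x <> CC0 -> y <> CC0 -> Cmul x y <> CC0.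
Proof.
  intros Hx Hy E. pose proof (Cnorm_pos x Hx). pose proof (Cnorm_pos y Hy).
  assert (Cnorm (Cmul x y) = 0) by (rewrite E; unfold Cnorm, CC0; simpl; replace (0*0+0*0) with 0 by ring; apply sqrt_0).
  rewrite Cnorm_mul in H1. nra.
Qed.

Lemma sub_ne0 x y : x <> y -> Csub x y <> CC0.
Proof.
  intros H E; apply H. destruct x, y; unfold Csub, Cadd, Copp, CC0 in E; simpl in E.
  injection E; intros; f_equal; lra.
Qed.

Lemma err_cc s t0 be q r di ai : Cmul be q = Csub s t0 ->
  Csub (Cadd (Cmul s di) ai) (Cadd (Cadd (Cmul t0 di) ai) (Cmul (Cmul be r) di))
  = Cmul (Cmul be (Csub q r)) di.
Proof.
  intro H. transitivity (Cmul (Csub (Csub s t0) (Cmul be r)) di); [cring|].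
  rewrite <- H; cring.
Qed.

Theorem lemma3p8 (n : nat) (lam mu : CC) (a b : Cn n) :
  lam <> CC0 -> lam <> CC1 -> mu <> CC0 -> mu <> CC1 -> a <> b ->
  (forall w, closure (orbit a b lam mu a) w <-> cline a b w) ->
  forall z, cline a b z ->
  forall w, closure (orbit a b lam mu z) w <-> cline a b w.
Proof.
  intros Hl0 Hl1 Hm0 Hm1 Hab Hyp z [t0 Hz] w. subst z.
  change (vadd (vscale t0 (vsub b a)) a) with (pt a b t0).
  split.
  - intro Hw. apply Hyp. apply closure_idem. eapply closure_mono; [|exact Hw].
    intros s [h [Hh Es]]. subst s. destruct (lemA n a b lam mu h Hh t0) as [r E].
    apply Hyp. rewrite E. exists r; reflexivity.
  - intros [s Hs] eps Heps. subst w. change (vadd (vscale s (vsub b a)) a) with (pt a b s).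
    set (be := beta lam mu).
    assert (Hbe : be <> CC0).
    { apply mul_ne0; apply sub_ne0; auto. }
    assert (Hd : exists i0, vsub b a i0 <> CC0).
    { apply not_all_ex_not. intro Hall. apply Hab. apply functional_extensionality; intro i.
      specialize (Hall i). unfold vsub in Hall. destruct (a i), (b i).
      unfold Csub, Cadd, Copp, CC0 in Hall; simpl in Hall. injection Hall; intros; f_equal; lra. }
    destruct Hd as [i0 Hi0].
    destruct (fin_bound n (fun i => Cnorm (vsub b a i))) as [D HD].
    pose proof (Cnorm_pos _ Hi0) as Pc0. pose proof (HD i0) as HDi0. simpl in HDi0.
    pose proof (Cnorm_pos _ Hbe) as Pbe.
    set (q := Cmul (Csub s t0) (Cinv be)).
    assert (Hq : Cmul be q = Csub s t0).
    { unfold q. transitivity (Cmul (Csub s t0) (Cmul be (Cinv be))); [cring|].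
      rewrite Cinv_r by exact Hbe. cring. }
    set (K := Cnorm be * D + 1).
    assert (HK : 0 < K) by (unfold K; nra).
    set (del := eps * Cnorm (vsub b a i0) / K).
    assert (Hdel : 0 < del) by (unfold del; apply Rdiv_lt_0_compat; nra).
    destruct (proj2 (Hyp (pt a b q)) (ex_intro _ q eq_refl) del Hdel) as [s0 [[h [Hh Es0]] Hc]].
    subst s0. destruct (lemB n a b lam mu h Hl0 Hm0 Hh) as [r [Er Tr]].
    exists (trans a b (Cmul be r) (pt a b t0)). split.
    + exists (trans a b (Cmul be r)). split; [exact Tr | reflexivity].
    + intro i. specialize (Hc i0). rewrite Er in Hc.
      assert (E0 : Csub (pt a b q i0) (pt a b r i0) = Cmul (Csub q r) (vsub b a i0))
        by (unfold pt, vadd, vscale, vsub; generalize (a i0) (b i0); intros; cring).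
      rewrite E0, Cnorm_mul in Hc.
      assert (E1 : Csub (pt a b s i) (trans a b (Cmul be r) (pt a b t0) i)
                   = Cmul (Cmul be (Csub q r)) (vsub b a i))
        by (unfold pt, trans, vadd, vscale, vsub; apply err_cc; exact Hq).
      rewrite E1, !Cnorm_mul.
      pose proof (HD i) as HDi. simpl in HDi.
      pose proof (Cnorm_nonneg (Csub q r)) as PN. pose proof (Cnorm_nonneg (vsub b a i)).
      set (N := Cnorm (Csub q r)) in *. set (c0 := Cnorm (vsub b a i0)) in *.
      set (B := Cnorm be) in *. set (e := Cnorm (vsub b a i)) in *.
      assert (HNK : N * K < eps).
      { unfold del in Hc. apply Rmult_lt_compat_r with (r := K) in Hc; [|exact HK].
        replace (eps * c0 / K * K) with (eps * c0) in Hc by (field; lra).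
        nra. }
      unfold K in HNK.
      assert (B * N * e <= B * N * D).
      { apply Rmult_le_compat_l; [apply Rmult_le_pos; lra | exact HDi]. }
      assert (N * (B * D + 1) = B * N * D + N) by ring.
      lra.
Qed.
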